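(* Let $\mathcal K$ be a 2-category. (1) The following data form a 2-category $\mathrm{Mnd}^\iota(\mathcal K)$: 0-cells are monads in $\mathcal K$; 1-cells $t\to t'$ are the 1-cells $(V,\psi)$ of $\mathrm{EM}^w(\mathcal K)$; 2-cells $(V,\psi)\Rightarrow(W,\phi)$ are 2-cells $\omega:V\Rightarrow W$ of $\mathcal K$ satisfying $\omega t\ast\psi=W\mu\ast\phi t\ast t'\omega t\ast t'\psi\ast t'\eta'V$; horizontal and vertical compositions are those of $\mathcal K$. Moreover there is a 2-functor $G^\iota:\mathrm{Mnd}^\iota(\mathcal K)\to\mathrm{EM}^w(\mathcal K)$ which is the identity on 0-cells and 1-cells and sends a 2-cell $\omega:(V,\psi)\Rightarrow(W,\phi)$ to $\omega t\ast\psi\ast\eta'V$. (2) The following data form a 2-category $\mathrm{Mnd}^\pi(\mathcal K)$: 0-cells are monads in $\mathcal K$; 1-cells are the 1-cells of $\mathrm{EM}^w(\mathcal K)$; 2-cells $(V,\psi)\Rightarrow(W,\phi)$ are 2-cells $\omega:V\Rightarrow W$ of $\mathcal K$ satisfying $\phi\ast t'\omega=W\mu\ast\phi t\ast\eta'Wt\ast\omega t\ast\psi$; compositions are those of $\mathcal K$. Moreover there is a 2-functor $G^\pi:\mathrm{Mnd}^\pi(\mathcal K)\to\mathrm{EM}^w(\mathcal K)$ which is the identity on 0-cells and 1-cells and sends $\omega$ to $\phi\ast\eta'W\ast\omega$.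
   Context: Conventions in a 2-category $\mathcal K$: horizontal composition and whiskering by juxtaposition in the order of functor composition; identity 1-cell of $k$ written $k$, identity 2-cell of $V$ written $V$; vertical composition $\ast$ with $\alpha\ast\beta$ meaning $\beta$ then $\alpha$. A monad $(t,\mu,\eta)$ on $k$: $t:k\to k$, $\mu:tt\Rightarrow t$, $\eta:k\Rightarrow t$, associative and unital; in the 2-categories below, horizontal composite of 1-cells $(V,\psi):t\to t'$ and $(V',\psi'):t'\to t''$ is $(V'V,V'\psi\ast\psi'V)$ and the identity 1-cell on $(t,\mu,\eta)$ (on $k$) is $(k,t)$. The 2-category $\mathrm{EM}^w(\mathcal K)$: 0-cells are monads; a 1-cell $(t,\mu,\eta)\to(t',\mu',\eta')$ ($t$ on $k$, $t'$ on $k'$) is $(V,\psi)$, $V:k\to k'$, $\psi:t'V\Rightarrow Vt$, with $V\mu\ast\psi t\ast t'\psi=\psi\ast\mu'V$; a 2-cell $(V,\psi)\Rightarrow(W,\phi)$ is $\varrho:V\Rightarrow Wt$ with $W\mu\ast\varrho t\ast\psi=W\mu\ast\phi t\ast t'\varrho$ and $\varrho=W\mu\ast\phi t\ast\eta'Wt\ast\varrho$; identity 2-cell on $(W,\phi)$ is $\phi\ast\eta'W$; horizontal composite of 2-cells $\varrho:(V,\psi)\Rightarrow(W,\phi)$, $\varrho':(V',\psi')\Rightarrow(W',\phi')$ is $W'W\mu\ast W'\varrho t\ast W'\psi\ast\varrho'V$; vertical composite of $\varrho$ and $\tau:(W,\phi)\Rightarrow(U,\theta)$ is $U\mu\ast\tau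 t\ast\varrho$. *)

(* Defs.v *)
Set Implicit Arguments.
Unset Strict Implicit.

(* comp1 g f  = "g f"  (f first, then g: order of functor composition) *)
(* vcomp a b  = "a * b" (b first, then a)                              *)
(* hcomp a b  = "a b" : C2 (g f) (g' f') for a : g => g', b : f => f'  *)
Record TwoCatData := {
  Obj : Type;
  Hom : Obj -> Obj -> Type;
  C2 : forall a b : Obj, Hom a b -> Hom a b -> Type;
  id1 : forall a : Obj, Hom a a;
  comp1 : forall a b c : Obj, Hom b c -> Hom a b -> Hom a c;
  id2 : forall (a b : Obj) (f : Hom a b), C2 f f;
  vcomp : forall (a b : Obj) (f g h : Hom a b), C2 g h -> C2 f g -> C2 f h;
  hcomp : forall (a b c : Obj) (g g' : Hom b c) (f f' : Hom a b),
      C2 g g' -> C2 f f' -> C2 (comp1 g f) (comp1 g' f')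
}.

Arguments Hom {K} a b : rename.
Arguments C2 {K a b} f g : rename.
Arguments id1 {K} a : rename.
Arguments comp1 {K a b c} g f : rename.
Arguments id2 {K a b} f : rename.
Arguments vcomp {K a b f g h} α β : rename.
Arguments hcomp {K a b c g g' f f'} α β : rename.

Notation "g ⊙ f" := (comp1 g f) (at level 40, left associativity).
Notation "α ∗ β" := (vcomp α β) (at level 45, right associativity).
Notation "α ⋆ β" := (hcomp α β) (at level 42, left associativity).

Definition castS {K : TwoCatData} {a b : Obj K} {f f' g : Hom a b}
  (e : f = f') (x : C2 f g) : C2 f' g :=
  match e in _ = y return C2 y g with eq_refl => x end.
Definition castT {K : TwoCatData} {a b : Obj K} {f g g' : Hom a b}
  (e : g = g') (x : C2 f g) : C2 f g' :=
  match e in _ = y return C2 f y with eq_refl => x end.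

Record TwoCatAx (K : TwoCatData) : Prop := {
  ax_comp1A : forall (a b c d : Obj K) (h : Hom c d) (g : Hom b c) (f : Hom a b),
      h ⊙ (g ⊙ f) = (h ⊙ g) ⊙ f;
  ax_comp1_idl : forall (a b : Obj K) (f : Hom a b), id1 b ⊙ f = f;
  ax_comp1_idr : forall (a b : Obj K) (f : Hom a b), f ⊙ id1 a = f;
  ax_vcompA : forall (a b : Obj K) (f g h i : Hom a b)
      (α : C2 h i) (β : C2 g h) (γ : C2 f g), α ∗ (β ∗ γ) = (α ∗ β) ∗ γ;
  ax_vcomp_idl : forall (a b : Obj K) (f g : Hom a b) (α : C2 f g), id2 g ∗ α = α;
  ax_vcomp_idr : forall (a b : Obj K) (f g : Hom a b) (α : C2 f g), α ∗ id2 f = α;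
  ax_hcomp_id2 : forall (a b c : Obj K) (g : Hom b c) (f : Hom a b),
      id2 g ⋆ id2 f = id2 (g ⊙ f);
  ax_interchange : forall (a b c : Obj K) (g g' g'' : Hom b c) (f f' f'' : Hom a b)
      (α : C2 g' g'') (β : C2 g g') (γ : C2 f' f'') (δ : C2 f f'),
      (α ∗ β) ⋆ (γ ∗ δ) = (α ⋆ γ) ∗ (β ⋆ δ);
  ax_hcompA : forall (a b c d : Obj K) (h h' : Hom c d) (g g' : Hom b c) (f f' : Hom a b)
      (α : C2 h h') (β : C2 g g') (γ : C2 f f'),
      castS (ax_comp1A h g f) (castT (ax_comp1A h' g' f') (α ⋆ (β ⋆ γ))) = (α ⋆ β) ⋆ γ;
  ax_hcomp_idl : forall (a b : Obj K) (f f' : Hom a b) (α : C2 f f'),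
      castS (ax_comp1_idl f) (castT (ax_comp1_idl f') (id2 (id1 b) ⋆ α)) = α;
  ax_hcomp_idr : forall (a b : Obj K) (f f' : Hom a b) (α : C2 f f'),
      castS (ax_comp1_idr f) (castT (ax_comp1_idr f') (α ⋆ id2 (id1 a))) = α
}.

Record TwoCat := { tc_data :> TwoCatData; tc_ax : TwoCatAx tc_data }.

Section TwoCatFacts.
Variable K : TwoCat.
Definition comp1A {a b c d : Obj K} (h : Hom c d) (g : Hom b c) (f : Hom a b) :
  h ⊙ (g ⊙ f) = (h ⊙ g) ⊙ f := ax_comp1A (tc_ax K) h g f.
Definition comp1_idl {a b : Obj K} (f : Hom a b) : id1 b ⊙ f = f :=
  ax_comp1_idl (tc_ax K) f.
Definition comp1_idr {a b : Obj K} (f : Hom a b) : f ⊙ id1 a = f :=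
  ax_comp1_idr (tc_ax K) f.
End TwoCatFacts.

(* whiskering: X α  and  α X *)
Definition wl {K : TwoCatData} {a b c : Obj K} (X : Hom b c) {f f' : Hom a b}
  (α : C2 f f') : C2 (X ⊙ f) (X ⊙ f') := id2 X ⋆ α.
Definition wr {K : TwoCatData} {a b c : Obj K} {g g' : Hom b c}
  (α : C2 g g') (X : Hom a b) : C2 (g ⊙ X) (g' ⊙ X) := α ⋆ id2 X.

Record Monad (K : TwoCat) := {
  mk : Obj K;
  mt : Hom mk mk;
  mmu : C2 (mt ⊙ mt) mt;
  meta : C2 (id1 mk) mt;
  m_assoc : mmu ∗ wr mmu mt = castS (comp1A mt mt mt) (mmu ∗ wl mt mmu);
  m_unitl : castS (comp1_idl mt) (mmu ∗ wr meta mt) = id2 mt;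
  m_unitr : castS (comp1_idr mt) (mmu ∗ wl mt meta) = id2 mt
}.
Arguments mk {K} m.
Arguments mt {K} m.
Arguments mmu {K} m.
Arguments meta {K} m.

Section EMw.
Variable K : TwoCat.

(* the type of the 2-cell psi of a candidate 1-cell (V,psi) : T -> T' *)
Definition Psi (T T' : Monad K) (V : Hom (mk T) (mk T')) : Type :=
  C2 (mt T' ⊙ V) (V ⊙ mt T).
Arguments Psi : clear implicits.

Definition castPsi (T T' : Monad K) {V V' : Hom (mk T) (mk T')} (e : V = V')
  (ψ : Psi T T' V) : Psi T T' V' :=
  match e in _ = y return Psi T T' y with eq_refl => ψ end.

Section TwoMonads.
Variables T T' : Monad K.
Local Notation t := (mt T).
Local Notation t' := (mt T').
Local Notation mu := (mmu T).
Local Notation mu' := (mmu T').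
Local Notation eta' := (meta T').

(* 1-cells of EM^w(K):  V mu * psi t * t' psi = psi * mu' V *)
Definition emw1 (V : Hom (mk T) (mk T')) (ψ : Psi T T' V) : Prop :=
  wl V mu ∗ castT (eq_sym (comp1A V t t)) (wr ψ t ∗ castT (comp1A t' V t) (wl t' ψ))
  = castS (eq_sym (comp1A t' t' V)) (ψ ∗ wr mu' V).

(* 2-cells rho : (V,psi) => (W,phi) of EM^w(K):
     W mu * rho t * psi = W mu * phi t * t' rho
     rho = W mu * phi t * eta' W t * rho                               *)
Definition emw2 {V W : Hom (mk T) (mk T')} (ψ : Psi T T' V) (φ : Psi T T' W)
  (ρ : C2 V (W ⊙ t)) : Prop :=
  wl W mu ∗ castT (eq_sym (comp1A W t t)) (wr ρ t ∗ ψ)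
  = wl W mu ∗ castT (eq_sym (comp1A W t t)) (wr φ t ∗ castT (comp1A t' W t) (wl t' ρ))
  /\
  ρ = wl W mu ∗ castT (eq_sym (comp1A W t t))
        (wr φ t ∗ castT (comp1A t' W t)
           (castS (comp1_idl (W ⊙ t)) (wr eta' (W ⊙ t)) ∗ ρ)).

Definition emw_id2 {W : Hom (mk T) (mk T')} (φ : Psi T T' W) : C2 W (W ⊙ t) :=
  φ ∗ castS (comp1_idl W) (wr eta' W).

Definition emw_vcomp {V W U : Hom (mk T) (mk T')}
  (τ : C2 W (U ⊙ t)) (ρ : C2 V (W ⊙ t)) : C2 V (U ⊙ t) :=
  wl U mu ∗ castT (eq_sym (comp1A U t t)) (wr τ t ∗ ρ).

Definition mndI {V W : Hom (mk T) (mk T')} (ψ : Psi T T' V) (φ : Psi T T' W)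
  (ω : C2 V W) : Prop :=
  wr ω t ∗ ψ
  = wl W mu ∗ castT (eq_sym (comp1A W t t))
      (wr φ t ∗ castT (comp1A t' W t)
         (wl t' (wr ω t) ∗ (wl t' ψ ∗ wl t' (castS (comp1_idl V) (wr eta' V))))).

Definition GI {V W : Hom (mk T) (mk T')} (ψ : Psi T T' V) (ω : C2 V W) : C2 V (W ⊙ t) :=
  wr ω t ∗ (ψ ∗ castS (comp1_idl V) (wr eta' V)).

Definition mndP {V W : Hom (mk T) (mk T')} (ψ : Psi T T' V) (φ : Psi T T' W)
  (ω : C2 V W) : Prop :=
  φ ∗ wl t' ω
  = wl W mu ∗ castT (eq_sym (comp1A W t t))
      (wr φ t ∗ castT (comp1A t' W t)
         (castS (comp1_idl (W ⊙ t)) (wr eta' (W ⊙ t)) ∗ (wr ω t ∗ ψ))).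

Definition GP {V W : Hom (mk T) (mk T')} (φ : Psi T T' W) (ω : C2 V W) : C2 V (W ⊙ t) :=
  φ ∗ (castS (comp1_idl W) (wr eta' W) ∗ ω).

End TwoMonads.

Definition id_psi (T : Monad K) : Psi T T (id1 (mk T)) :=
  castS (eq_sym (comp1_idr (mt T))) (castT (eq_sym (comp1_idl (mt T))) (id2 (mt T))).

Section ThreeMonads.
Variables T T' T'' : Monad K.
Local Notation t := (mt T).
Local Notation t' := (mt T').
Local Notation t'' := (mt T'').
Local Notation mu := (mmu T).

(* horizontal composite of 1-cells (V,psi) : T -> T' and (V',psi') : T' -> T'':
   (V'V, V' psi * psi' V) *)
Definition comp_psi {V : Hom (mk T) (mk T')} {V' : Hom (mk T') (mk T'')}
  (ψ' : Psi T' T'' V') (ψ : Psi T T' V) : Psi T T'' (V' ⊙ V) :=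
  castT (comp1A V' V t)
    (wl V' ψ ∗ castT (eq_sym (comp1A V' t' V))
                  (castS (eq_sym (comp1A t'' V' V)) (wr ψ' V))).

(* horizontal composite in EM^w(K) of rho : (V,psi) => (W,phi) (T -> T') and
   rho' : (V',psi') => (W',phi') (T' -> T''):  W'W mu * W' rho t * W' psi * rho' V *)
Definition emw_hcomp {V W : Hom (mk T) (mk T')} {V' W' : Hom (mk T') (mk T'')}
  (ψ : Psi T T' V) (ρ' : C2 V' (W' ⊙ t')) (ρ : C2 V (W ⊙ t)) : C2 (V' ⊙ V) ((W' ⊙ W) ⊙ t) :=
  wl (W' ⊙ W) mu ∗
    castT (eq_trans (f_equal (fun X => W' ⊙ X) (eq_sym (comp1A W t t))) (comp1A W' W (t ⊙ t)))
      (wl W' (wr ρ t) ∗ (wl W' ψ ∗ castT (eq_sym (comp1A W' t' V)) (wr ρ' V))).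

End ThreeMonads.
End EMw.

Arguments emw1 {K} T T' V ψ.
Arguments emw2 {K T T' V W} ψ φ ρ.
Arguments emw_id2 {K T T' W} φ.
Arguments emw_vcomp {K T T' V W U} τ ρ.
Arguments mndI {K T T' V W} ψ φ ω.
Arguments GI {K T T' V W} ψ ω.
Arguments mndP {K T T' V W} ψ φ ω.
Arguments GP {K T T' V W} φ ω.
Arguments id_psi {K} T.
Arguments comp_psi {K T T' T'' V V'} ψ' ψ.
Arguments emw_hcomp {K T T' T'' V W V' W'} ψ ρ' ρ.
Arguments castPsi {K T T' V V'} e ψ.
Arguments Psi {K} T T' V.

(* Main.v *)
Require Import Defs.
From Stdlib Require Import ClassicalEpsilon Eqdep.


Definition cell {K : TwoCat} (a b : Obj K) :=
  {p : Hom a b * Hom a b & option (C2 (fst p) (snd p))}.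
Definition src {K : TwoCat} {a b : Obj K} (X : cell a b) : Hom a b := fst (projT1 X).
Definition tgt {K : TwoCat} {a b : Obj K} (X : cell a b) : Hom a b := snd (projT1 X).
Definition pk {K : TwoCat} {a b : Obj K} {f g : Hom a b} (x : C2 f g) : cell a b :=
  existT (fun p => option (C2 (fst p) (snd p))) (f, g) (Some x).
Definition atom {K : TwoCat} {a b : Obj K} {f g : Hom a b} (x : C2 f g) : cell a b := pk x.
Definition idc {K : TwoCat} {a b : Obj K} (f : Hom a b) : cell a b := pk (id2 f).
Definition vc {K : TwoCat} {a b : Obj K} (X Y : cell a b) : cell a b :=
  existT (fun p => option (C2 (fst p) (snd p))) (src Y, tgt X)
    (match projT2 X, projT2 Y with
     | Some x, Some y =>
         match excluded_middle_informative (tgt Y = src X) with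
         | left e => Some (x ∗ castT e y)
         | right _ => None
         end
     | _, _ => None
     end).
Definition hc {K : TwoCat} {a b c : Obj K} (X : cell b c) (Y : cell a b) : cell a c :=
  existT (fun p => option (C2 (fst p) (snd p))) (src X ⊙ src Y, tgt X ⊙ tgt Y)
    (match projT2 X, projT2 Y with
     | Some x, Some y => Some (x ⋆ y)
     | _, _ => None
     end).
Definition lay {K : TwoCat} {a b c d : Obj K} (L : Hom c d) (G : cell b c) (R : Hom a b)
  : cell a d := hc (idc L) (hc G (idc R)).

Lemma pk_inj {K : TwoCat} {a b : Obj K} {f g : Hom a b} (x y : C2 f g) : pk x = pk y -> x = y.
Proof. unfold pk. intro H. apply inj_pair2 in H. congruence. Qed.

Lemma pk_v {K : TwoCat} {a b : Obj K} {f g h : Hom a b} (x : C2 g h) (y : C2 f g) :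
  pk (x ∗ y) = vc (pk x) (pk y).
Proof.
  unfold vc, pk; cbn. destruct (excluded_middle_informative (g = g)) as [e|n].
  - rewrite (UIP_refl _ _ e). reflexivity.
  - contradiction n; reflexivity.
Qed.
Lemma pk_h {K : TwoCat} {a b c : Obj K} {g g' : Hom b c} {f f' : Hom a b}
  (x : C2 g g') (y : C2 f f') : pk (x ⋆ y) = hc (pk x) (pk y).
Proof. reflexivity. Qed.
Lemma pk_id2 {K : TwoCat} {a b : Obj K} (f : Hom a b) : pk (id2 f) = idc f.
Proof. reflexivity. Qed.
Lemma pk_castS {K : TwoCat} {a b : Obj K} {f f' g : Hom a b} (e : f = f') (x : C2 f g) :
  pk (castS e x) = pk x.
Proof. destruct e; reflexivity. Qed.
Lemma pk_castT {K : TwoCat} {a b : Obj K} {f g g' : Hom a b} (e : g = g') (x : C2 f g) :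
  pk (castT e x) = pk x.
Proof. destruct e; reflexivity. Qed.
Lemma pk_castPsi {K : TwoCat} (T T' : Monad K) (V V' : Hom (mk T) (mk T')) (e : V = V')
  (x : Psi T T' V) : @pk K _ _ (mt T' ⊙ V') (V' ⊙ mt T) (castPsi e x) = pk x.
Proof. destruct e; reflexivity. Qed.
Lemma none_eq {K : TwoCat} {a b : Obj K} (f f' g g' : Hom a b) :
  f = f' -> g = g' ->
  existT (fun p => option (C2 (fst p) (snd p))) (f, g) None =
  existT (fun p => option (C2 (fst p) (snd p))) (f', g') None.
Proof. intros; subst; reflexivity. Qed.

Lemma hc_id1l {K : TwoCat} {a b : Obj K} (X : cell a b) : hc (idc (id1 b)) X = X.
Proof.
  destruct X as [[f g] [x|]]; cbn.
  - change (pk (id2 (id1 b) ⋆ x) = pk x).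
    transitivity (pk (castS (ax_comp1_idl (tc_ax K) f) (castT (ax_comp1_idl (tc_ax K) g) (id2 (id1 b) ⋆ x)))).
    + rewrite pk_castS, pk_castT; reflexivity.
    + f_equal; apply ax_hcomp_idl.
  - apply none_eq; apply (ax_comp1_idl (tc_ax K)).
Qed.
Lemma hc_id1r {K : TwoCat} {a b : Obj K} (X : cell a b) : hc X (idc (id1 a)) = X.
Proof.
  destruct X as [[f g] [x|]]; cbn.
  - change (pk (x ⋆ id2 (id1 a)) = pk x).
    transitivity (pk (castS (ax_comp1_idr (tc_ax K) f) (castT (ax_comp1_idr (tc_ax K) g) (x ⋆ id2 (id1 a))))).
    + rewrite pk_castS, pk_castT; reflexivity.
    + f_equal; apply ax_hcomp_idr.
  - apply none_eq; apply (ax_comp1_idr (tc_ax K)).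
Qed.
Lemma hc_assoc {K : TwoCat} {a b c d : Obj K} (X : cell c d) (Y : cell b c) (Z : cell a b) :
  hc (hc X Y) Z = hc X (hc Y Z).
Proof.
  destruct X as [[f g] [x|]]; destruct Y as [[f1 g1] [y|]]; destruct Z as [[f2 g2] [z|]]; cbn;
  try (apply none_eq; symmetry; apply (ax_comp1A (tc_ax K))).
  change (pk ((x ⋆ y) ⋆ z) = pk (x ⋆ (y ⋆ z))).
  rewrite <- (ax_hcompA (tc_ax K) x y z). rewrite pk_castS, pk_castT. reflexivity.
Qed.
Lemma hc_idc {K : TwoCat} {a b c : Obj K} (g : Hom b c) (f : Hom a b) :
  hc (idc g) (idc f) = idc (g ⊙ f).
Proof. unfold idc. rewrite <- pk_h. f_equal. apply (ax_hcomp_id2 (tc_ax K)). Qed.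

Lemma vc_assoc {K : TwoCat} {a b : Obj K} (X Y Z : cell a b) :
  vc (vc X Y) Z = vc X (vc Y Z).
Proof.
  destruct X as [[f g] [x|]]; destruct Y as [[f1 g1] [y|]]; destruct Z as [[f2 g2] [z|]];
  unfold vc; cbn; try reflexivity;
  repeat match goal with |- context [excluded_middle_informative ?P] =>
    destruct (excluded_middle_informative P) end; try reflexivity; subst; cbn; try reflexivity.
  f_equal. f_equal. symmetry; apply (ax_vcompA (tc_ax K)).
Qed.

Ltac dec_all := repeat match goal with |- context [excluded_middle_informative ?P] =>
    destruct (excluded_middle_informative P) end.

Lemma vc_idl {K : TwoCat} {a b : Obj K} (g : Hom a b) (X : cell a b) :
  tgt X = g -> vc (idc g) X = X.
Proof.
  destruct X as [[f g'] [x|]]; unfold tgt; cbn; intro; subst; unfold vc; cbn; dec_all;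
  try reflexivity.
  - rewrite (UIP_refl _ _ e); cbn. f_equal. f_equal. apply (ax_vcomp_idl (tc_ax K)).
  - contradiction n; reflexivity.
Qed.
Lemma vc_idr {K : TwoCat} {a b : Obj K} (f : Hom a b) (X : cell a b) :
  src X = f -> vc X (idc f) = X.
Proof.
  destruct X as [[f' g] [x|]]; unfold src; cbn; intro; subst; unfold vc; cbn; dec_all;
  try reflexivity.
  - rewrite (UIP_refl _ _ e); cbn. f_equal. f_equal. apply (ax_vcomp_idr (tc_ax K)).
  - contradiction n; reflexivity.
Qed.
Lemma interchange {K : TwoCat} {a b c : Obj K} (A B : cell b c) (C D : cell a b) :
  tgt B = src A -> tgt D = src C -> hc (vc A B) (vc C D) = vc (hc A C) (hc B D).
Proof.
  destruct A as [[fa ga] [xa|]]; destruct B as [[fb gb] [xb|]];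
  destruct C as [[fc gc] [xc|]]; destruct D as [[fd gd] [xd|]];
  unfold src, tgt; cbn; intros; subst; unfold vc, hc; cbn; dec_all; cbn; try reflexivity;
  try (exfalso; auto; fail).
  rewrite (UIP_refl _ _ e), (UIP_refl _ _ e0), (UIP_refl _ _ e1); cbn.
  f_equal. f_equal. apply (ax_interchange (tc_ax K)).
Qed.
Lemma hc_split {K : TwoCat} {a b c : Obj K} (A : cell b c) (B : cell a b) :
  hc A B = vc (hc A (idc (tgt B))) (hc (idc (src A)) B).
Proof.
  destruct A as [[fa ga] [xa|]]; destruct B as [[fb gb] [xb|]];
  unfold src, tgt, vc, hc; cbn; dec_all; cbn; try reflexivity;
  try (exfalso; auto; fail).
  rewrite (UIP_refl _ _ e); cbn. f_equal. f_equal.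
  rewrite <- (ax_interchange (tc_ax K)).
  rewrite (ax_vcomp_idl (tc_ax K)), (ax_vcomp_idr (tc_ax K)). reflexivity.
Qed.
Lemma hc_split' {K : TwoCat} {a b c : Obj K} (A : cell b c) (B : cell a b) :
  hc A B = vc (hc (idc (tgt A)) B) (hc A (idc (src B))).
Proof.
  destruct A as [[fa ga] [xa|]]; destruct B as [[fb gb] [xb|]];
  unfold src, tgt, vc, hc; cbn; dec_all; cbn; try reflexivity;
  try (exfalso; auto; fail).
  rewrite (UIP_refl _ _ e); cbn. f_equal. f_equal.
  rewrite <- (ax_interchange (tc_ax K)).
  rewrite (ax_vcomp_idl (tc_ax K)), (ax_vcomp_idr (tc_ax K)). reflexivity.
Qed.

Lemma pk_atom {K : TwoCat} {a b : Obj K} {f g : Hom a b} (x : C2 f g) :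
  pk x = lay (id1 b) (atom x) (id1 a).
Proof. unfold lay. rewrite hc_id1l, hc_id1r. reflexivity. Qed.
Lemma W1 {K : TwoCat} {a b c d e : Obj K} (X : Hom d e) (L : Hom c d) (G : cell b c) (R : Hom a b) :
  hc (idc X) (lay L G R) = lay (X ⊙ L) G R.
Proof. unfold lay. rewrite <- hc_assoc, hc_idc. reflexivity. Qed.
Lemma W2 {K : TwoCat} {a0 a b c d : Obj K} (L : Hom c d) (G : cell b c) (R : Hom a b) (X : Hom a0 a) :
  hc (lay L G R) (idc X) = lay L G (R ⊙ X).
Proof. unfold lay. rewrite !hc_assoc, hc_idc. reflexivity. Qed.
Lemma W4 {K : TwoCat} {a b c : Obj K} (X : Hom b c) (A B : cell a b) :
  tgt B = src A -> hc (idc X) (vc A B) = vc (hc (idc X) A) (hc (idc X) B).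
Proof.
  intro H. transitivity (hc (vc (idc X) (idc X)) (vc A B)).
  - f_equal. symmetry. apply vc_idl. reflexivity.
  - apply interchange; auto.
Qed.
Lemma W5 {K : TwoCat} {a b c : Obj K} (A B : cell b c) (X : Hom a b) :
  tgt B = src A -> hc (vc A B) (idc X) = vc (hc A (idc X)) (hc B (idc X)).
Proof.
  intro H. transitivity (hc (vc A B) (vc (idc X) (idc X))).
  - f_equal. symmetry. apply vc_idl. reflexivity.
  - apply interchange; auto.
Qed.
Lemma W6 {K : TwoCat} {a b c d e f0 g0 : Obj K}
  (L : Hom f0 g0) {f g : Hom e f0} (x : C2 f g) (R : Hom d e)
  (L' : Hom c d) {f' g' : Hom b c} (x' : C2 f' g') (R' : Hom a b) :
  hc (lay L (atom x) R) (lay L' (atom x') R') =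
  vc (lay L (atom x) (R ⊙ (L' ⊙ (g' ⊙ R')))) (lay ((L ⊙ (f ⊙ R)) ⊙ L') (atom x') R').
Proof.
  rewrite hc_split.
  change (tgt (lay L' (atom x') R')) with (L' ⊙ (g' ⊙ R')).
  change (src (lay L (atom x) R)) with (L ⊙ (f ⊙ R)).
  rewrite W2, W1. reflexivity.
Qed.
Lemma swap_core {K : TwoCat} {a b c d e f0 : Obj K}
  (L1 : Hom e f0) {f1 g1 : Hom d e} (x1 : C2 f1 g1) (M : Hom c d)
  {f2 g2 : Hom b c} (x2 : C2 f2 g2) (R2 : Hom a b) :
  vc (lay L1 (atom x1) (M ⊙ (id1 c ⊙ (g2 ⊙ R2)))) (lay ((L1 ⊙ (f1 ⊙ M)) ⊙ id1 c) (atom x2) R2)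
  = vc (lay ((L1 ⊙ (g1 ⊙ M)) ⊙ id1 c) (atom x2) R2) (lay L1 (atom x1) (M ⊙ (id1 c ⊙ (f2 ⊙ R2)))).
Proof.
  rewrite <- W6.
  rewrite hc_split'.
  change (tgt (lay L1 (atom x1) M)) with (L1 ⊙ (g1 ⊙ M)).
  change (src (lay (id1 c) (atom x2) R2)) with (id1 c ⊙ (f2 ⊙ R2)).
  rewrite W2, W1. reflexivity.
Qed.
Lemma swap_lay {K : TwoCat} {a b c d e f0 : Obj K}
  (L1 : Hom e f0) {f1 g1 : Hom d e} (x1 : C2 f1 g1) (M : Hom c d)
  {f2 g2 : Hom b c} (x2 : C2 f2 g2) (R2 : Hom a b) R1 L2 L2' R1' :
  R1 = M ⊙ (id1 c ⊙ (g2 ⊙ R2)) -> L2 = (L1 ⊙ (f1 ⊙ M)) ⊙ id1 c ->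
  L2' = (L1 ⊙ (g1 ⊙ M)) ⊙ id1 c -> R1' = M ⊙ (id1 c ⊙ (f2 ⊙ R2)) ->
  vc (lay L1 (atom x1) R1) (lay L2 (atom x2) R2) = vc (lay L2' (atom x2) R2) (lay L1 (atom x1) R1').
Proof. intros; subst; apply swap_core. Qed.

Lemma src_vc {K : TwoCat} {a b : Obj K} (X Y : cell a b) : src (vc X Y) = src Y. Proof. reflexivity. Qed.
Lemma tgt_vc {K : TwoCat} {a b : Obj K} (X Y : cell a b) : tgt (vc X Y) = tgt X. Proof. reflexivity. Qed.
Lemma src_hc {K : TwoCat} {a b c : Obj K} (X : cell b c) (Y : cell a b) : src (hc X Y) = src X ⊙ src Y. Proof. reflexivity. Qed.
Lemma tgt_hc {K : TwoCat} {a b c : Obj K} (X : cell b c) (Y : cell a b) : tgt (hc X Y) = tgt X ⊙ tgt Y. Proof. reflexivity. Qed.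
Lemma src_idc {K : TwoCat} {a b : Obj K} (f : Hom a b) : src (idc f) = f. Proof. reflexivity. Qed.
Lemma tgt_idc {K : TwoCat} {a b : Obj K} (f : Hom a b) : tgt (idc f) = f. Proof. reflexivity. Qed.
Lemma src_atom {K : TwoCat} {a b : Obj K} {f g : Hom a b} (x : C2 f g) : src (atom x) = f. Proof. reflexivity. Qed.
Lemma tgt_atom {K : TwoCat} {a b : Obj K} {f g : Hom a b} (x : C2 f g) : tgt (atom x) = g. Proof. reflexivity. Qed.
Lemma src_lay {K : TwoCat} {a b c d : Obj K} (L : Hom c d) (G : cell b c) (R : Hom a b) :
  src (lay L G R) = L ⊙ (src G ⊙ R). Proof. reflexivity. Qed.
Lemma tgt_lay {K : TwoCat} {a b c d : Obj K} (L : Hom c d) (G : cell b c) (R : Hom a b) :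
  tgt (lay L G R) = L ⊙ (tgt G ⊙ R). Proof. reflexivity. Qed.
Global Opaque pk atom idc lay vc hc src tgt.


Ltac hnorm := repeat (rewrite comp1A || rewrite comp1_idl || rewrite comp1_idr).
Ltac ep := repeat (rewrite src_vc || rewrite tgt_vc || rewrite src_hc || rewrite tgt_hc ||
   rewrite src_idc || rewrite tgt_idc || rewrite src_atom || rewrite tgt_atom ||
   rewrite src_lay || rewrite tgt_lay); hnorm; reflexivity.

Ltac conv1 := repeat (rewrite pk_v || rewrite pk_h || rewrite pk_id2 || rewrite pk_castS ||
          rewrite pk_castT || match goal with |- context [pk (castPsi _ _)] => rewrite pk_castPsi end);
  repeat match goal with |- context [@pk _ _ _ _ _ ?x] => rewrite (pk_atom x) end.
Ltac conv := apply pk_inj; conv1.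
Ltac convH H := apply (f_equal pk) in H; revert H; conv1; intro H.

Ltac norm := repeat first [
  rewrite W1 | rewrite W2 | rewrite hc_idc | rewrite W6 |
  rewrite W4 by ep | rewrite W5 by ep | rewrite vc_assoc |
  rewrite vc_idl by ep | rewrite vc_idr by ep |
  rewrite comp1A | rewrite comp1_idl | rewrite comp1_idr ].

Ltac unf := unfold emw1, emw2, emw_id2, emw_vcomp, mndI, GI, mndP, GP, id_psi, comp_psi,
  emw_hcomp, wl, wr in *.


Ltac tail_at n t := lazymatch n with
  | O => constr:(t)
  | S ?m => lazymatch t with vc _ ?r => tail_at m r end end.

Ltac repl sub new tac :=
  lazymatch goal with |- ?lhs = ?rhs =>
  let E := fresh "E" in assert (E : sub = new) by tac;
  lazymatch lhs with context C [sub] => let lhs' := context C [new] in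
    transitivity lhs'; [rewrite E; reflexivity | clear E; norm] end end.

Ltac app i n H L R :=
  lazymatch goal with |- ?lhs = ?rhs =>
  let sub := tail_at i lhs in
  lazymatch type of H with ?X = ?Y =>
  let new := match constr:(tt) with
     | _ => let rest := tail_at n sub in constr:(vc (hc (idc L) (hc Y (idc R))) rest)
     | _ => constr:(hc (idc L) (hc Y (idc R))) end in
  let old := match constr:(tt) with
     | _ => let rest := tail_at n sub in constr:(vc (hc (idc L) (hc X (idc R))) rest)
     | _ => constr:(hc (idc L) (hc X (idc R))) end in
  repl sub new ltac:(transitivity old; [norm; reflexivity | rewrite H; reflexivity])
  end end.

Ltac sw i M :=
  lazymatch goal with |- ?lhs = ?rhs =>
  let sub := tail_at i lhs in
  lazymatch type of M with @Hom _ ?c _ =>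
  lazymatch sub with
  | vc (lay ?L1 (@atom _ _ _ ?f1 ?g1 ?x1) ?R1) (vc (lay ?L2 (@atom _ _ _ ?f2 ?g2 ?x2) ?R2) ?r) =>
    let L2' := constr:((L1 ⊙ (g1 ⊙ M)) ⊙ id1 c) in
    let R1' := constr:(M ⊙ (id1 c ⊙ (f2 ⊙ R2))) in
    repl sub (vc (lay L2' (atom x2) R2) (vc (lay L1 (atom x1) R1') r))
      ltac:(rewrite <- !vc_assoc; rewrite (swap_lay L1 x1 M x2 R2 R1 L2 L2' R1') by ep; reflexivity)
  | vc (lay ?L1 (@atom _ _ _ ?f1 ?g1 ?x1) ?R1) (lay ?L2 (@atom _ _ _ ?f2 ?g2 ?x2) ?R2) =>
    let L2' := constr:((L1 ⊙ (g1 ⊙ M)) ⊙ id1 c) in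
    let R1' := constr:(M ⊙ (id1 c ⊙ (f2 ⊙ R2))) in
    repl sub (vc (lay L2' (atom x2) R2) (lay L1 (atom x1) R1'))
      ltac:(apply (swap_lay L1 x1 M x2 R2 R1 L2 L2' R1'); ep)
  end end end.

Ltac start := unf; conv; norm.
Ltac conv1H H := repeat (rewrite pk_v in H || rewrite pk_h in H || rewrite pk_id2 in H ||
   rewrite pk_castS in H || rewrite pk_castT in H ||
   match type of H with context [pk (castPsi _ _)] => rewrite pk_castPsi in H end);
  repeat match type of H with context [@pk _ _ _ _ _ ?x] => rewrite (pk_atom x) in H end.
Ltac normH H := repeat first [
  rewrite W1 in H | rewrite W2 in H | rewrite hc_idc in H | rewrite W6 in H |
  rewrite W4 in H by ep | rewrite W5 in H by ep | rewrite vc_assoc in H |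
  rewrite vc_idl in H by ep | rewrite vc_idr in H by ep |
  rewrite comp1A in H | rewrite comp1_idl in H | rewrite comp1_idr in H ].
Ltac prepH H := unf; conv1H H; normH H.
Ltac ml T A Ul Ur := pose proof (m_assoc T) as A; pose proof (m_unitl T) as Ul;
  pose proof (m_unitr T) as Ur; apply (f_equal pk) in A, Ul, Ur; prepH A; prepH Ul; prepH Ur.
Ltac hyp H := apply (f_equal pk) in H; prepH H.
Ltac app0 i n H := lazymatch type of H with @eq (@cell _ ?a ?b) _ _ => app i n H (id1 b) (id1 a) end.
Ltac appl i n H L := lazymatch type of H with @eq (@cell _ ?a ?b) _ _ => app i n H L (id1 a) end.
Ltac appr i n H R := lazymatch type of H with @eq (@cell _ ?a ?b) _ _ => app i n H (id1 b) R end.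
Ltac fin := reflexivity.
Ltac sw' i M :=
  lazymatch goal with |- ?lhs = ?rhs =>
  let sub := tail_at i lhs in
  lazymatch type of M with @Hom _ ?c _ =>
  lazymatch sub with
  | vc (lay ?L1 (@atom _ _ _ ?f1 ?g1 ?x1) ?R1) (vc (lay ?L2 (@atom _ _ _ ?f2 ?g2 ?x2) ?R2) ?r) =>
    let R2' := constr:(M ⊙ (id1 c ⊙ (g1 ⊙ R1))) in
    let L1' := constr:((L2 ⊙ (f2 ⊙ M)) ⊙ id1 c) in
    repl sub (vc (lay L2 (atom x2) R2') (vc (lay L1' (atom x1) R1) r))
      ltac:(rewrite <- !vc_assoc; rewrite <- (swap_lay L2 x2 M x1 R1 R2' L1' L1 R2) by ep; reflexivity)
  | vc (lay ?L1 (@atom _ _ _ ?f1 ?g1 ?x1) ?R1) (lay ?L2 (@atom _ _ _ ?f2 ?g2 ?x2) ?R2) =>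
    let R2' := constr:(M ⊙ (id1 c ⊙ (g1 ⊙ R1))) in
    let L1' := constr:((L2 ⊙ (f2 ⊙ M)) ⊙ id1 c) in
    repl sub (vc (lay L2 (atom x2) R2') (lay L1' (atom x1) R1))
      ltac:(symmetry; apply (swap_lay L2 x2 M x1 R1 R2' L1' L1 R2); ep)
  end end end.


Lemma c1a (K : TwoCat) (T : Monad K) : emw1 T T (id1 (mk T)) (id_psi T).
Proof. start. fin. Qed.
Lemma c1b (K : TwoCat) (T T' T'' : Monad K) (V : Hom (mk T) (mk T')) (V' : Hom (mk T') (mk T''))
  (ψ : Psi T T' V) (ψ' : Psi T' T'' V') :
  emw1 T T' V ψ -> emw1 T' T'' V' ψ' -> emw1 T T'' (V' ⊙ V) (comp_psi ψ' ψ).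
Proof.
  intros H1 H2. unfold emw1 in H1, H2. apply (f_equal pk) in H1, H2.
  prepH H1. prepH H2. start.
  sw 2 (id1 (mk T')). app 0 3 H1 V' (id1 (mk T)). app 1 3 H2 (id1 (mk T'')) V. reflexivity.
Qed.

Lemma c1c (K : TwoCat) (T T' T'' T''' : Monad K) (V : Hom (mk T) (mk T'))
          (V' : Hom (mk T') (mk T'')) (V'' : Hom (mk T'') (mk T'''))
          (ψ : Psi T T' V) (ψ' : Psi T' T'' V') (ψ'' : Psi T'' T''' V'') :
          castPsi (comp1A V'' V' V) (comp_psi ψ'' (comp_psi ψ' ψ))
          = comp_psi (comp_psi ψ'' ψ') ψ.
Proof. start. reflexivity. Qed.
Lemma c1d (K : TwoCat) (T T' : Monad K) (V : Hom (mk T) (mk T')) (ψ : Psi T T' V) :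
          castPsi (comp1_idr V) (comp_psi ψ (id_psi T)) = ψ
          /\ castPsi (comp1_idl V) (comp_psi (id_psi T') ψ) = ψ.
Proof. split; start; reflexivity. Qed.
Lemma i1 (K : TwoCat) (T T' : Monad K) (V : Hom (mk T) (mk T')) (ψ : Psi T T' V) :
          emw1 T T' V ψ -> mndI ψ ψ (id2 V).
Proof.
  intro H. hyp H. ml T' A Ul Ur. start. symmetry. app0 0 3 H. appr 1 2 Ur V. fin. Qed.

Lemma i2 (K : TwoCat) (T T' : Monad K) (V W U : Hom (mk T) (mk T'))
            (ψ : Psi T T' V) (φ : Psi T T' W) (θ : Psi T T' U) (ω : C2 V W) (τ : C2 W U) :
            emw1 T T' V ψ -> emw1 T T' W φ -> emw1 T T' U θ ->
            mndI ψ φ ω -> mndI φ θ τ -> mndI ψ θ (τ ∗ ω).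
Proof.
  intros E1 E2 E3 A B. hyp E1. hyp E2. hyp E3. hyp A. hyp B. ml T MA MUl MUr. ml T' NA NUl NUr.
  start.
  app0 1 2 A. sw 0 (id1 (mk T)). appr 1 2 B (mt T). appl 0 2 MA U.
  Set Ltac Backtrace. sw' 1 (id1 (mk T)). sw' 2 (id1 (mk T)). sw 5 (id1 (mk T')). sw 6 (id1 (mk T')).
  sw 7 (id1 (mk T')). appl 3 5 (eq_sym A) (mt T'). fin.
Qed.
Lemma i3 (K : TwoCat) (T T' T'' : Monad K) (V W : Hom (mk T) (mk T'))
            (V' W' : Hom (mk T') (mk T''))
            (ψ : Psi T T' V) (φ : Psi T T' W) (ψ' : Psi T' T'' V') (φ' : Psi T' T'' W')
            (ω : C2 V W) (ω' : C2 V' W') :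
            emw1 T T' V ψ -> emw1 T T' W φ -> emw1 T' T'' V' ψ' -> emw1 T' T'' W' φ' ->
            mndI ψ φ ω -> mndI ψ' φ' ω' ->
            mndI (comp_psi ψ' ψ) (comp_psi φ' φ) (ω' ⋆ ω).
Proof.
  intros E1 E2 E3 E4 A B. hyp E1. hyp E2. hyp E3. hyp E4. hyp A. hyp B.
  ml T MA MUl MUr. ml T' NA NUl NUr. ml T'' PA PUl PUr.
  start.
  sw 0 (id1 (mk T')). sw 1 (id1 (mk T')). appl 0 2 A W'. appr 5 2 B V.
  sw' 4 (id1 (mk T')). sw' 3 (id1 (mk T')). sw' 2 (id1 (mk T')).
  app 1 2 (eq_sym E2) W' (mt T). appl 0 2 MA (W' ⊙ W). sw' 1 (id1 (mk T)).
  appl 2 5 (eq_sym A) (W' ⊙ mt T').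
  sw' 3 (id1 (mk T')). sw' 2 (id1 (mk T')). sw' 4 (id1 (mk T')). sw' 3 (id1 (mk T')).
  fin.
Qed.
Lemma gi1 (K : TwoCat) (T T' : Monad K) (V W : Hom (mk T) (mk T'))
            (ψ : Psi T T' V) (φ : Psi T T' W) (ω : C2 V W) :
            emw1 T T' V ψ -> emw1 T T' W φ -> mndI ψ φ ω -> emw2 ψ φ (GI ψ ω).
Proof.
  intros E1 E2 A. hyp E1. hyp E2. hyp A. ml T MA MUl MUr. ml T' NA NUl NUr.
  unfold emw2. split; start.
  - sw' 0 (id1 (mk T)). sw 3 (id1 (mk T')). app0 1 3 E1. appr 2 2 NUl V.
    symmetry. app0 0 5 (eq_sym A). fin.
  - symmetry. sw 2 (id1 (mk T')). sw 3 (id1 (mk T')). sw 4 (id1 (mk T')).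
    app0 0 5 (eq_sym A). fin.
Qed.
Lemma gi2 (K : TwoCat) (T T' : Monad K) (V : Hom (mk T) (mk T')) (ψ : Psi T T' V) :
            emw1 T T' V ψ -> GI ψ (id2 V) = emw_id2 ψ.
Proof. intros; start; fin. Qed.
Lemma gi3 (K : TwoCat) (T T' : Monad K) (V W U : Hom (mk T) (mk T'))
            (ψ : Psi T T' V) (φ : Psi T T' W) (θ : Psi T T' U) (ω : C2 V W) (τ : C2 W U) :
            emw1 T T' V ψ -> emw1 T T' W φ -> emw1 T T' U θ ->
            mndI ψ φ ω -> mndI φ θ τ ->
            GI ψ (τ ∗ ω) = emw_vcomp (GI φ τ) (GI ψ ω).
Proof.
  intros E1 E2 E3 A B. hyp E1. hyp E2. hyp E3. hyp A. hyp B. ml T MA MUl MUr. ml T' NA NUl NUr.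
  start. symmetry. sw' 0 (id1 (mk T)). sw 3 (id1 (mk T')). sw 4 (id1 (mk T')). sw 5 (id1 (mk T')).
  app0 1 5 (eq_sym A). fin.
Qed.
Lemma gi4 (K : TwoCat) (T T' T'' : Monad K) (V W : Hom (mk T) (mk T'))
            (V' W' : Hom (mk T') (mk T''))
            (ψ : Psi T T' V) (φ : Psi T T' W) (ψ' : Psi T' T'' V') (φ' : Psi T' T'' W')
            (ω : C2 V W) (ω' : C2 V' W') :
            emw1 T T' V ψ -> emw1 T T' W φ -> emw1 T' T'' V' ψ' -> emw1 T' T'' W' φ' ->
            mndI ψ φ ω -> mndI ψ' φ' ω' ->
            GI (comp_psi ψ' ψ) (ω' ⋆ ω) = emw_hcomp ψ (GI ψ' ω') (GI ψ ω).
Proof.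
  intros E1 E2 E3 E4 A B. hyp E1. hyp E2. hyp E3. hyp E4. hyp A. hyp B.
  ml T MA MUl MUr. ml T' NA NUl NUr. start. symmetry.
  sw' 0 (id1 (mk T)). sw 3 (id1 (mk T')). appl 1 3 E1 W'. app 2 2 NUl W' V.
  symmetry. sw 0 (id1 (mk T')). sw 1 (id1 (mk T')). fin.
Qed.
Lemma p1 (K : TwoCat) (T T' : Monad K) (V : Hom (mk T) (mk T')) (ψ : Psi T T' V) :
          emw1 T T' V ψ -> mndP ψ ψ (id2 V).
Proof. intro E1. hyp E1. ml T' NA NUl NUr. start. symmetry. sw 2 (id1 (mk T')). app0 0 3 E1. appr 1 2 NUl V. fin. Qed.
Lemma p2 (K : TwoCat) (T T' : Monad K) (V W U : Hom (mk T) (mk T'))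
            (ψ : Psi T T' V) (φ : Psi T T' W) (θ : Psi T T' U) (ω : C2 V W) (τ : C2 W U) :
            emw1 T T' V ψ -> emw1 T T' W φ -> emw1 T T' U θ ->
            mndP ψ φ ω -> mndP φ θ τ -> mndP ψ θ (τ ∗ ω).
Proof.
  intros E1 E2 E3 A B. hyp E1. hyp E2. hyp E3. hyp A. hyp B. ml T MA MUl MUr. ml T' NA NUl NUr.
  start. app0 0 2 B. app0 4 2 A. sw 3 (id1 (mk T)). sw 2 U. sw 1 (id1 (mk T)).
  appl 0 2 (eq_sym MA) U. appr 1 5 (eq_sym B) (mt T). sw' 2 (id1 (mk T')). fin.
Qed.
Lemma gp1 (K : TwoCat) (T T' : Monad K) (V W : Hom (mk T) (mk T'))
            (ψ : Psi T T' V) (φ : Psi T T' W) (ω : C2 V W) :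
            emw1 T T' V ψ -> emw1 T T' W φ -> mndP ψ φ ω -> emw2 ψ φ (GP φ ω).
Proof.
  intros E1 E2 A. hyp E1. hyp E2. hyp A. ml T MA MUl MUr. ml T' NA NUl NUr.
  unfold emw2. split; start.
  - app0 0 5 (eq_sym A). symmetry. app0 0 3 E2. appr 1 2 NUr W. fin.
  - symmetry. sw 2 (id1 (mk T')). app0 0 3 E2. appr 1 2 NUl W. fin.
Qed.
Lemma gp2 (K : TwoCat) (T T' : Monad K) (V : Hom (mk T) (mk T')) (ψ : Psi T T' V) :
            emw1 T T' V ψ -> GP ψ (id2 V) = emw_id2 ψ.
Proof. intros; start; fin. Qed.
Lemma gp3 (K : TwoCat) (T T' : Monad K) (V W U : Hom (mk T) (mk T'))
            (ψ : Psi T T' V) (φ : Psi T T' W) (θ : Psi T T' U) (ω : C2 V W) (τ : C2 W U) :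
            emw1 T T' V ψ -> emw1 T T' W φ -> emw1 T T' U θ ->
            mndP ψ φ ω -> mndP φ θ τ ->
            GP θ (τ ∗ ω) = emw_vcomp (GP θ τ) (GP φ ω).
Proof.
  intros E1 E2 E3 A B. hyp E1. hyp E2. hyp E3. hyp A. hyp B. ml T MA MUl MUr. ml T' NA NUl NUr.
  start. symmetry. app0 0 5 (eq_sym B). sw' 1 (id1 (mk T')). fin.
Qed.
Lemma p3 (K : TwoCat) (T T' T'' : Monad K) (V W : Hom (mk T) (mk T'))
            (V' W' : Hom (mk T') (mk T''))
            (ψ : Psi T T' V) (φ : Psi T T' W) (ψ' : Psi T' T'' V') (φ' : Psi T' T'' W')
            (ω : C2 V W) (ω' : C2 V' W') :
            emw1 T T' V ψ -> emw1 T T' W φ -> emw1 T' T'' V' ψ' -> emw1 T' T'' W' φ' ->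
            mndP ψ φ ω -> mndP ψ' φ' ω' ->
            mndP (comp_psi ψ' ψ) (comp_psi φ' φ) (ω' ⋆ ω).
Proof.
  intros E1 E2 E3 E4 A B. hyp E1. hyp E2. hyp E3. hyp E4. hyp A. hyp B.
  ml T MA MUl MUr. ml T' NA NUl NUr. start.
  appr 1 2 B W. sw 5 (id1 (mk T')). sw 4 (mt T'). sw 3 (W' ⊙ mt T'). sw 2 (mt T'). sw 1 (id1 (mk T')).
  appl 0 2 A W'. appl 4 2 (eq_sym E1) W'. sw 3 (id1 (mk T)). sw 2 W. sw 1 (id1 (mk T)).
  appl 0 2 (eq_sym MA) (W' ⊙ W).
  symmetry. sw 4 (id1 (mk T')). sw 3 W'. sw 2 (id1 (mk T')). app 1 2 A W' (mt T).
  sw 8 (id1 (mk T')). sw 7 W'. sw 6 (id1 (mk T')). fin.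
Qed.
Lemma gp4 (K : TwoCat) (T T' T'' : Monad K) (V W : Hom (mk T) (mk T'))
            (V' W' : Hom (mk T') (mk T''))
            (ψ : Psi T T' V) (φ : Psi T T' W) (ψ' : Psi T' T'' V') (φ' : Psi T' T'' W')
            (ω : C2 V W) (ω' : C2 V' W') :
            emw1 T T' V ψ -> emw1 T T' W φ -> emw1 T' T'' V' ψ' -> emw1 T' T'' W' φ' ->
            mndP ψ φ ω -> mndP ψ' φ' ω' ->
            GP (comp_psi φ' φ) (ω' ⋆ ω) = emw_hcomp ψ (GP φ' ω') (GP φ ω).
Proof.
  intros E1 E2 E3 E4 A B. hyp E1. hyp E2. hyp E3. hyp E4. hyp A. hyp B.
  ml T MA MUl MUr. ml T' NA NUl NUr. start.
  sw 3 (id1 (mk T')). sw 2 W'. sw 1 (id1 (mk T')). appl 0 2 A W'. fin.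
Qed.

Theorem corollary1p4 (K : TwoCat) :
  (* The 1-cells (common to Mnd^iota(K), Mnd^pi(K) and EM^w(K)): identities and
     composites of EM^w-1-cells are EM^w-1-cells; composition is associative and
     unital. *)
  ( (forall T : Monad K, emw1 T T (id1 (mk T)) (id_psi T))
    /\ (forall (T T' T'' : Monad K) (V : Hom (mk T) (mk T')) (V' : Hom (mk T') (mk T''))
          (ψ : Psi T T' V) (ψ' : Psi T' T'' V'),
          emw1 T T' V ψ -> emw1 T' T'' V' ψ' -> emw1 T T'' (V' ⊙ V) (comp_psi ψ' ψ))
    /\ (forall (T T' T'' T''' : Monad K) (V : Hom (mk T) (mk T'))
          (V' : Hom (mk T') (mk T'')) (V'' : Hom (mk T'') (mk T'''))
          (ψ : Psi T T' V) (ψ' : Psi T' T'' V') (ψ'' : Psi T'' T''' V''),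
          emw1 T T' V ψ -> emw1 T' T'' V' ψ' -> emw1 T'' T''' V'' ψ'' ->
          castPsi (comp1A V'' V' V) (comp_psi ψ'' (comp_psi ψ' ψ))
          = comp_psi (comp_psi ψ'' ψ') ψ)
    /\ (forall (T T' : Monad K) (V : Hom (mk T) (mk T')) (ψ : Psi T T' V),
          emw1 T T' V ψ ->
          castPsi (comp1_idr V) (comp_psi ψ (id_psi T)) = ψ
          /\ castPsi (comp1_idl V) (comp_psi (id_psi T') ψ) = ψ) )
  /\
  (* (1) Mnd^iota(K) is a 2-category (with the compositions of K) and
         G^iota : Mnd^iota(K) -> EM^w(K) is a 2-functor *)
  ( ( (forall (T T' : Monad K) (V : Hom (mk T) (mk T')) (ψ : Psi T T' V),
          emw1 T T' V ψ -> mndI ψ ψ (id2 V))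
      /\ (forall (T T' : Monad K) (V W U : Hom (mk T) (mk T'))
            (ψ : Psi T T' V) (φ : Psi T T' W) (θ : Psi T T' U) (ω : C2 V W) (τ : C2 W U),
            emw1 T T' V ψ -> emw1 T T' W φ -> emw1 T T' U θ ->
            mndI ψ φ ω -> mndI φ θ τ -> mndI ψ θ (τ ∗ ω))
      /\ (forall (T T' T'' : Monad K) (V W : Hom (mk T) (mk T'))
            (V' W' : Hom (mk T') (mk T''))
            (ψ : Psi T T' V) (φ : Psi T T' W) (ψ' : Psi T' T'' V') (φ' : Psi T' T'' W')
            (ω : C2 V W) (ω' : C2 V' W'),
            emw1 T T' V ψ -> emw1 T T' W φ -> emw1 T' T'' V' ψ' -> emw1 T' T'' W' φ' ->
            mndI ψ φ ω -> mndI ψ' φ' ω' ->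
            mndI (comp_psi ψ' ψ) (comp_psi φ' φ) (ω' ⋆ ω)) )
    /\
    ( (forall (T T' : Monad K) (V W : Hom (mk T) (mk T'))
            (ψ : Psi T T' V) (φ : Psi T T' W) (ω : C2 V W),
            emw1 T T' V ψ -> emw1 T T' W φ -> mndI ψ φ ω -> emw2 ψ φ (GI ψ ω))
      /\ (forall (T T' : Monad K) (V : Hom (mk T) (mk T')) (ψ : Psi T T' V),
            emw1 T T' V ψ -> GI ψ (id2 V) = emw_id2 ψ)
      /\ (forall (T T' : Monad K) (V W U : Hom (mk T) (mk T'))
            (ψ : Psi T T' V) (φ : Psi T T' W) (θ : Psi T T' U) (ω : C2 V W) (τ : C2 W U),
            emw1 T T' V ψ -> emw1 T T' W φ -> emw1 T T' U θ ->
            mndI ψ φ ω -> mndI φ θ τ ->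
            GI ψ (τ ∗ ω) = emw_vcomp (GI φ τ) (GI ψ ω))
      /\ (forall (T T' T'' : Monad K) (V W : Hom (mk T) (mk T'))
            (V' W' : Hom (mk T') (mk T''))
            (ψ : Psi T T' V) (φ : Psi T T' W) (ψ' : Psi T' T'' V') (φ' : Psi T' T'' W')
            (ω : C2 V W) (ω' : C2 V' W'),
            emw1 T T' V ψ -> emw1 T T' W φ -> emw1 T' T'' V' ψ' -> emw1 T' T'' W' φ' ->
            mndI ψ φ ω -> mndI ψ' φ' ω' ->
            GI (comp_psi ψ' ψ) (ω' ⋆ ω) = emw_hcomp ψ (GI ψ' ω') (GI ψ ω)) ) )
  /\
  (* (2) Mnd^pi(K) is a 2-category (with the compositions of K) and
         G^pi : Mnd^pi(K) -> EM^w(K) is a 2-functor *)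
  ( ( (forall (T T' : Monad K) (V : Hom (mk T) (mk T')) (ψ : Psi T T' V),
          emw1 T T' V ψ -> mndP ψ ψ (id2 V))
      /\ (forall (T T' : Monad K) (V W U : Hom (mk T) (mk T'))
            (ψ : Psi T T' V) (φ : Psi T T' W) (θ : Psi T T' U) (ω : C2 V W) (τ : C2 W U),
            emw1 T T' V ψ -> emw1 T T' W φ -> emw1 T T' U θ ->
            mndP ψ φ ω -> mndP φ θ τ -> mndP ψ θ (τ ∗ ω))
      /\ (forall (T T' T'' : Monad K) (V W : Hom (mk T) (mk T'))
            (V' W' : Hom (mk T') (mk T''))
            (ψ : Psi T T' V) (φ : Psi T T' W) (ψ' : Psi T' T'' V') (φ' : Psi T' T'' W')
            (ω : C2 V W) (ω' : C2 V' W'),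
            emw1 T T' V ψ -> emw1 T T' W φ -> emw1 T' T'' V' ψ' -> emw1 T' T'' W' φ' ->
            mndP ψ φ ω -> mndP ψ' φ' ω' ->
            mndP (comp_psi ψ' ψ) (comp_psi φ' φ) (ω' ⋆ ω)) )
    /\
    ( (forall (T T' : Monad K) (V W : Hom (mk T) (mk T'))
            (ψ : Psi T T' V) (φ : Psi T T' W) (ω : C2 V W),
            emw1 T T' V ψ -> emw1 T T' W φ -> mndP ψ φ ω -> emw2 ψ φ (GP φ ω))
      /\ (forall (T T' : Monad K) (V : Hom (mk T) (mk T')) (ψ : Psi T T' V),
            emw1 T T' V ψ -> GP ψ (id2 V) = emw_id2 ψ)
      /\ (forall (T T' : Monad K) (V W U : Hom (mk T) (mk T'))
            (ψ : Psi T T' V) (φ : Psi T T' W) (θ : Psi T T' U) (ω : C2 V W) (τ : C2 W U),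
            emw1 T T' V ψ -> emw1 T T' W φ -> emw1 T T' U θ ->
            mndP ψ φ ω -> mndP φ θ τ ->
            GP θ (τ ∗ ω) = emw_vcomp (GP θ τ) (GP φ ω))
      /\ (forall (T T' T'' : Monad K) (V W : Hom (mk T) (mk T'))
            (V' W' : Hom (mk T') (mk T''))
            (ψ : Psi T T' V) (φ : Psi T T' W) (ψ' : Psi T' T'' V') (φ' : Psi T' T'' W')
            (ω : C2 V W) (ω' : C2 V' W'),
            emw1 T T' V ψ -> emw1 T T' W φ -> emw1 T' T'' V' ψ' -> emw1 T' T'' W' φ' ->
            mndP ψ φ ω -> mndP ψ' φ' ω' ->
            GP (comp_psi φ' φ) (ω' ⋆ ω) = emw_hcomp ψ (GP φ' ω') (GP φ ω)) ) ).
Proof.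
  split; [|split].
  - split; [|split; [|split]].
    + intro T; apply c1a.
    + intros; eapply c1b; eauto.
    + intros; apply c1c.
    + intros; apply c1d.
  - split; split; [| split | | split; [| split]].
    + intros; apply i1; auto.
    + intros; eapply i2; eauto.
    + intros; eapply i3; eauto.
    + intros; eapply gi1; eauto.
    + intros; apply gi2; auto.
    + intros; eapply gi3; eauto.
    + intros; eapply gi4; eauto.
  - split; split; [| split | | split; [| split]].
    + intros; apply p1; auto.
    + intros; eapply p2; eauto.
    + intros; eapply p3; eauto.
    + intros; eapply gp1; eauto.
    + intros; apply gp2; auto.
    + intros; eapply gp3; eauto.
    + intros; eapply gp4; eauto.
Qed.
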